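(* If a positive-dimensional complex quasi-projective variety $X$ is pseudo Brody hyperbolic, then $X$ is not $h$-special.
   Context: $X$ is pseudo Brody hyperbolic if there is a proper Zariski closed subset $E\subsetneq X$ such that every non-constant holomorphic map $f:\mathbb{C}\to X$ satisfies $f(\mathbb{C})\subset E$. For $x,y\in X$, $x\sim y$ iff there exist holomorphic maps $f_1,\dots,f_l:\mathbb{C}\to X$ such that, with $Z_i$ the Zariski closure of $f_i(\mathbb{C})$, $x\in Z_1$, $Z_i\cap Z_{i+1}\ne\emptyset$ for $1\le i<l$, and $y\in Z_l$; $X$ is $h$-special iff $\{(x,y):x\sim y\}$ is Zariski dense in $X\times X$. *)

(* Defs.v *)
From HB Require Import structures.
From mathcomp Require Import all_boot all_order all_algebra.
From mathcomp Require Import mpoly.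
From mathcomp Require Import all_classical all_reals all_analysis.
From mathcomp Require Import Rstruct Rstruct_topology.
From mathcomp Require Import complex.
Set Implicit Arguments. Unset Strict Implicit. Unset Printing Implicit Defensive.
Import Order.TTheory GRing.Theory Num.Theory.
Import numFieldTopology.Exports numFieldNormedType.Exports.
Local Open Scope ring_scope.
Local Open Scope classical_set_scope.

(* The complex numbers: complex closure R[i] of Stdlib's real numbers.  The
   topology / norm on CC^o is the one given by the complex modulus. *)
Definition CC : numClosedFieldType := complex Rdefinitions.R.

(* A point of P^N is
   represented by any nonzero vector; all subsets of P^N considered below are
   cones (stable under nonzero scaling), so they are sets of representatives. *)
Definition Vec (N : nat) := 'I_N.+1 -> CC.

Definition nonzero_vec N (v : Vec N) : Prop := exists i, v i != 0.

Definition same_point N (v w : Vec N) : Prop :=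
  exists c : CC, c != 0 /\ forall i, w i = c * v i.

Notation hpoly N := (mpoly.mpoly N.+1 CC).

Definition homogeneous N (p : hpoly N) : Prop :=
  exists d : nat, forall m, m \in mpoly.msupp p -> mpoly.mdeg m = d.

Definition zero_locus N (S : set (hpoly N)) : set (Vec N) :=
  [set v | nonzero_vec v /\ forall p, S p -> mpoly.meval v p = 0].

Definition zclosed N (A : set (Vec N)) : Prop :=
  exists S : set (hpoly N), (forall p, S p -> homogeneous p) /\ A = zero_locus S.

Definition zclosed_in N (X E : set (Vec N)) : Prop :=
  exists A, zclosed A /\ E = X `&` A.

Definition zclosure_in N (X T : set (Vec N)) : set (Vec N) :=
  [set v | X v /\ forall A, zclosed A -> T `<=` A -> A v].

Definition zirreducible N (Z : set (Vec N)) : Prop :=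
  Z !=set0 /\
  forall A1 A2, zclosed A1 -> zclosed A2 -> Z `<=` A1 `|` A2 ->
    Z `<=` A1 \/ Z `<=` A2.

Definition quasi_projective_variety N (X : set (Vec N)) : Prop :=
  (exists A B, zclosed A /\ zclosed B /\ X = A `\` B) /\ zirreducible X.

(* dim X >= 1 (Krull dimension of the Zariski topological space X): there is
   a strict chain Z0 < Z1 of irreducible closed subsets of X *)
Definition positive_dimensional N (X : set (Vec N)) : Prop :=
  exists Z0 Z1, zclosed_in X Z0 /\ zclosed_in X Z1 /\ zirreducible Z0 /\
    zirreducible Z1 /\ Z0 `<=` Z1 /\ Z0 <> Z1.

(* f : C -> P^N (given by representatives f z) is holomorphic: near every
   point it has a local holomorphic lift to C^(N+1) \ {0}. *)
Definition holomorphic_P N (f : CC -> Vec N) : Prop :=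
  (forall z, nonzero_vec (f z)) /\
  forall z0 : CC, exists (U : set CC) (G : CC -> Vec N),
    open (U : set CC^o) /\ U z0 /\
    forall z, U z ->
      nonzero_vec (G z) /\ same_point (G z) (f z) /\
      forall i, derivable ((fun w => G w i) : CC^o -> CC^o) z 1.

Definition holo_into N (X : set (Vec N)) (f : CC -> Vec N) : Prop :=
  holomorphic_P f /\ forall z, X (f z).

Definition nonconstant N (f : CC -> Vec N) : Prop :=
  exists z w, ~ same_point (f z) (f w).

Definition pseudo_Brody_hyperbolic N (X : set (Vec N)) : Prop :=
  exists E, zclosed_in X E /\ (exists x, X x /\ ~ E x) /\
    forall f, holo_into X f -> nonconstant f -> forall z, E (f z).

Definition h_rel N (X : set (Vec N)) (x y : Vec N) : Prop :=
  exists (l : nat) (fs : nat -> CC -> Vec N),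
    (0 < l)%N /\ (forall i, (i < l)%N -> holo_into X (fs i)) /\
    let Z i := zclosure_in X (range (fs i)) in
    Z 0%N x /\
    (forall i, (i.+1 < l)%N -> Z i `&` Z i.+1 !=set0) /\
    Z l.-1 y.

(* Zariski topology on P^N x P^N: zero loci of bihomogeneous polynomials in
   the 2(N+1) variables (x_0..x_N, y_0..y_N). *)
Notation bipoly N := (mpoly.mpoly (N.+1 + N.+1) CC).

Definition pair_vec N (x y : Vec N) : 'I_(N.+1 + N.+1) -> CC :=
  fun k => match fintype.split k with inl i => x i | inr j => y j end.

Definition bihomogeneous N (p : bipoly N) : Prop :=
  exists d1 d2 : nat, forall m, m \in mpoly.msupp p ->
    (\sum_(i < N.+1) m (lshift N.+1 i))%N = d1 /\
    (\sum_(j < N.+1) m (rshift N.+1 j))%N = d2.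

Definition zdense_in_square N (X : set (Vec N)) (R : Vec N -> Vec N -> Prop) :
  Prop :=
  forall S : set (bipoly N), (forall p, S p -> bihomogeneous p) ->
    (forall x y, X x -> X y -> R x y -> forall p, S p ->
       mpoly.meval (pair_vec x y) p = 0) ->
    forall x y, X x -> X y -> forall p, S p -> mpoly.meval (pair_vec x y) p = 0.

Definition h_special N (X : set (Vec N)) : Prop :=
  zdense_in_square X (h_rel X).

(* Main.v *)
Require Import Defs.
From HB Require Import structures.
From mathcomp Require Import all_boot all_order all_algebra.
From mathcomp Require Import mpoly.
From mathcomp Require Import all_classical all_reals all_analysis.
From mathcomp Require Import Rstruct Rstruct_topology complex.
From mathcomp Require Import ring.
Set Implicit Arguments. Unset Strict Implicit. Unset Printing Implicit Defensive.
Import Order.TTheory GRing.Theory Num.Theory.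
Local Open Scope ring_scope.
Local Open Scope classical_set_scope.

Section S.
Variable N : nat.
Implicit Types u v w : Vec N.

Definition prop u v := forall i j, u i * v j = u j * v i.

Lemma same_point_prop u v : same_point u v -> prop u v.
Proof. by case=> c [_ h] i j; rewrite !h; ring. Qed.

Lemma prop_sym u v : prop u v -> prop v u.
Proof. by move=> h i j; rewrite mulrC -h mulrC. Qed.

Lemma prop_refl u : prop u u.
Proof. by move=> i j; rewrite mulrC. Qed.

Lemma prop_trans u v w : nonzero_vec v -> prop u v -> prop v w -> prop u w.
Proof.
case=> k vk h1 h2 i j.
apply: (mulIf (mulf_neq0 vk vk)).
have -> : u i * w j * (v k * v k) = (u i * v k) * (v k * w j) by ring.
have -> : u j * w i * (v k * v k) = (u j * v k) * (v k * w i) by ring.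
rewrite (h1 i k) (h1 j k) (h2 k j) (h2 k i).
ring.
Qed.

Lemma prop_scale u v : nonzero_vec v -> prop u v ->
  forall i, u i = (u (@ord0 N) * 0 + 0) + u i.
Abort.

Lemma prop_scale u v : nonzero_vec v -> prop u v ->
  exists c, forall i, u i = c * v i.
Proof.
case=> k vk h; exists (u k / v k) => i.
by rewrite mulrAC -h mulfK.
Qed.

Lemma homog_scale (p : hpoly N) u v c : homogeneous p ->
  (forall i, u i = c * v i) -> meval v p = 0 -> meval u p = 0.
Proof.
case=> d hd huv hv.
rewrite mevalE (eq_big_seq (fun m => c ^+ d * (p@_m * \prod_i v i ^+ m i))).
  by rewrite -mulr_sumr -mevalE hv mulr0.
move=> m /hd <-; rewrite mulrCA; congr (_ * _).
rewrite mdegE -prodrXr -big_split /=; apply: eq_bigr => i _.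
by rewrite huv exprMn.
Qed.


Lemma cone (A : set (Vec N)) u v : zclosed A -> A v -> nonzero_vec u -> prop u v -> A u.
Proof.
case=> S [hS ->] [nzv hv] nzu huv; split => // p Sp.
have [c hc] := prop_scale nzv huv.
exact: homog_scale (hS p Sp) hc (hv p Sp).
Qed.

Definition linp (c : Vec N) i j : hpoly N := c i *: 'X_j - c j *: 'X_i.

Lemma meval_linp c i j v : meval v (linp c i j) = c i * v j - c j * v i.
Proof. by rewrite /linp mevalB !mevalZ !mevalXU. Qed.

Lemma linp_homog c i j : homogeneous (linp c i j).
Proof.
have h : linp c i j \is 1.-homog.
  rewrite /linp rpredB // rpredZ // dhomogX /= mdeg1 //.
by exists 1%N; apply/dhomogP.
Qed.

Definition Lc (c : Vec N) := zero_locus [set p | exists i j, p = linp c i j].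

Lemma Lc_closed c : zclosed (Lc c).
Proof. by exists [set p | exists i j, p = linp c i j]; split => // p [i [j ->]]; apply: linp_homog. Qed.

Lemma LcP c v : Lc c v <-> nonzero_vec v /\ prop c v.
Proof.
split.
  case=> nz h; split => // i j.
  have := h _ (ex_intro _ i (ex_intro _ j erefl)).
  by rewrite meval_linp => /eqP; rewrite subr_eq0 => /eqP.
case=> nz h; split => // p [i [j ->]].
by rewrite meval_linp h subrr.
Qed.

Section Chain.
Variables (X A : set (Vec N)).
Hypothesis cA : zclosed A.
Hypothesis hE : forall f, holo_into X f -> nonconstant f -> forall z, (X `&` A) (f z).
Hypothesis hX : forall v, X v -> nonzero_vec v.

Lemma closure_cases f : holo_into X f ->
  (zclosure_in X (range f) `<=` A) \/
  (exists c, nonzero_vec c /\ zclosure_in X (range f) `<=` [set v | prop c v]).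
Proof.
move=> hf; case: (pselect (nonconstant f)) => [nc|nc].
  left => v [_ hv]; apply: hv cA _ => _ [z _ <-]; exact: (hE hf nc z).2.
right; exists (f 0); split; first exact: hf.1.1 0.
move=> v [_ hv]; have : Lc (f 0) v.
  apply: hv (Lc_closed _) _ => _ [z _ <-]; apply/LcP; split; first exact: hf.1.1 z.
  apply: same_point_prop; apply: contra_notP nc => h; exists 0, z; exact: h.
by case/LcP.
Qed.

Lemma chain x y : X x -> ~ A x -> h_rel X x y -> prop x y.
Proof.
move=> Xx nAx [l [fs [l0 [hfs [Z0 [Zi Zl]]]]]].
have key : forall i, (i < l)%N -> forall v, zclosure_in X (range (fs i)) v -> prop x v.
  elim=> [|i IH] hi v hv.
    case: (closure_cases (hfs 0%N l0)) => [sub|[c [nzc sub]]].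
      by case: nAx; apply: sub.
    exact: prop_trans nzc (prop_sym (sub _ Z0)) (sub _ hv).
  have [w [w1 w2]] := Zi i hi.
  have xw := IH (ltnW hi) w w1.
  have nzw : nonzero_vec w := hX w1.1.
  case: (closure_cases (hfs _ hi)) => [sub|[c [nzc sub]]].
    by case: nAx; apply: cone cA (sub _ w2) (hX Xx) xw.
  have cw := sub _ w2.
  have xc := prop_trans nzw xw (prop_sym cw).
  exact: prop_trans nzc xc (sub _ hv).
by apply: key Zl; rewrite ltn_predL.
Qed.

End Chain.
End S.

Lemma two_points N (X A : set (Vec N)) x0 :
  quasi_projective_variety X -> positive_dimensional X -> zclosed A ->
  X x0 -> ~ A x0 -> (forall v, X v -> nonzero_vec v) ->
  exists x y, X x /\ X y /\ ~ A x /\ ~ A y /\ ~ prop x y.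
Proof.
move=> [_ irr] [Z0 [Z1 [[A0 [cA0 eZ0]] [[A1 [cA1 eZ1]] [irr0 [_ [sub ne]]]]]]].
move=> cA Xx0 nA0 hX.
apply: contra_notP ne => H.
have allprop : forall u, X u -> ~ A u -> prop x0 u.
  move=> u Xu nAu; apply: contra_notP H => npu; exists x0, u; done.
have : X `<=` A `|` Lc x0.
  move=> u Xu; case: (pselect (A u)) => [?|nAu]; [by left|right].
  by apply/LcP; split; [exact: hX|exact: allprop].
case/(irr.2 _ _ cA (Lc_closed x0)) => [XA|XL]; first by case: nA0; apply: XA.
have [v Z0v] := irr0.1.
have [Xv A0v] : X v /\ A0 v by rewrite eZ0 in Z0v.
have XZ0 : X `<=` Z0.
  move=> u Xu; rewrite eZ0; split => //.
  apply: cone cA0 A0v (hX u Xu) _.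
  have [_ pu] := (LcP _ _).1 (XL u Xu).
  have [_ pv] := (LcP _ _).1 (XL v Xv).
  exact: prop_trans (hX _ Xx0) (prop_sym pu) pv.
apply/seteqP; split => // u Z1u; apply: XZ0.
by rewrite eZ1 in Z1u; case: Z1u.
Qed.

Definition mfL N (m : 'X_{1..N.+1 + N.+1}) : nat :=
  (\sum_(i < N.+1) m (lshift N.+1 i))%N.
Definition mfR N (m : 'X_{1..N.+1 + N.+1}) : nat :=
  (\sum_(i < N.+1) m (rshift N.+1 i))%N.

Lemma mfL0 N : mfL (0%MM : 'X_{1..N.+1 + N.+1}) = 0%N.
Proof. by rewrite /mfL big1 // => i _; rewrite mnm0E. Qed.
Lemma mfLD N : {morph @mfL N : m1 m2 / (m1 + m2)%MM >-> (m1 + m2)%N}.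
Proof. by move=> m1 m2; rewrite /mfL -big_split; apply: eq_bigr => i _; rewrite mnmDE. Qed.
Lemma mfR0 N : mfR (0%MM : 'X_{1..N.+1 + N.+1}) = 0%N.
Proof. by rewrite /mfR big1 // => i _; rewrite mnm0E. Qed.
Lemma mfRD N : {morph @mfR N : m1 m2 / (m1 + m2)%MM >-> (m1 + m2)%N}.
Proof. by move=> m1 m2; rewrite /mfR -big_split; apply: eq_bigr => i _; rewrite mnmDE. Qed.

HB.instance Definition _ N := mpoly.isMeasure.Build (N.+1 + N.+1) (@mfL N) (@mfL0 N) (@mfLD N).
HB.instance Definition _ N := mpoly.isMeasure.Build (N.+1 + N.+1) (@mfR N) (@mfR0 N) (@mfRD N).

Lemma comp_homog n k (mf : mpoly.Measure.type k) (lq : n.-tuple {mpoly CC[k]}) e d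
  (p : {mpoly CC[n]}) :
  (forall i, tnth lq i \is e.-homog for mf) -> p \is d.-homog ->
  p \mPo lq \is (e * d).-homog for mf.
Proof.
move=> hl /dhomogP hp; rewrite comp_mpolyEX big_seq; apply: rpred_sum => m /hp <-.
apply: rpredZ; rewrite comp_mpolyX /= mdegE big_distrr /=.
elim/big_rec2: _ => [|i d' q _ hq]; first exact: dhomog1.
by apply: dhomogM => //; apply: dhomogMn.
Qed.

Lemma lr_neq N (i j : 'I_N.+1) : (lshift N.+1 i == rshift N.+1 j) = false.
Proof. by apply/negbTE; rewrite -val_eqE /= neq_ltn ltn_addr. Qed.

Lemma mfL_l N (i : 'I_N.+1) : mfL U_(lshift N.+1 i) = 1%N.
Proof.
rewrite /mfL (bigD1 i) //= mnm1E eqxx big1 // => j ne.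
by rewrite mnm1E (inj_eq (@lshift_inj _ _)) eq_sym (negbTE ne).
Qed.
Lemma mfR_r N (i : 'I_N.+1) : mfR U_(rshift N.+1 i) = 1%N.
Proof.
rewrite /mfR (bigD1 i) //= mnm1E eqxx big1 // => j ne.
by rewrite mnm1E (inj_eq (@rshift_inj _ _)) eq_sym (negbTE ne).
Qed.
Lemma mfL_r N (i : 'I_N.+1) : mfL U_(rshift N.+1 i) = 0%N.
Proof. by rewrite /mfL big1 // => j _; rewrite mnm1E eq_sym lr_neq. Qed.
Lemma mfR_l N (i : 'I_N.+1) : mfR U_(lshift N.+1 i) = 0%N.
Proof. by rewrite /mfR big1 // => j _; rewrite mnm1E lr_neq. Qed.

Definition tL N : (N.+1).-tuple (bipoly N) := [tuple 'X_(lshift N.+1 i) | i < N.+1].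
Definition tR N : (N.+1).-tuple (bipoly N) := [tuple 'X_(rshift N.+1 i) | i < N.+1].

Lemma XlL N (i : 'I_N.+1) : ('X_(lshift N.+1 i) : bipoly N) \is 1.-homog for @mfL N.
Proof. by rewrite dhomogX /= mfL_l. Qed.
Lemma XlR N (i : 'I_N.+1) : ('X_(lshift N.+1 i) : bipoly N) \is 0.-homog for @mfR N.
Proof. by rewrite dhomogX /= mfR_l. Qed.
Lemma XrL N (i : 'I_N.+1) : ('X_(rshift N.+1 i) : bipoly N) \is 0.-homog for @mfL N.
Proof. by rewrite dhomogX /= mfL_r. Qed.
Lemma XrR N (i : 'I_N.+1) : ('X_(rshift N.+1 i) : bipoly N) \is 1.-homog for @mfR N.
Proof. by rewrite dhomogX /= mfR_r. Qed.

Lemma pair_l N (x y : Vec N) i : pair_vec x y (lshift N.+1 i) = x i.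
Proof.
have h : fintype.split (lshift N.+1 i) = inl _ i by exact: (unsplitK (inl _ i)).
by rewrite /pair_vec h.
Qed.
Lemma pair_r N (x y : Vec N) i : pair_vec x y (rshift N.+1 i) = y i.
Proof.
have h : fintype.split (rshift N.+1 i) = inr _ i by exact: (unsplitK (inr _ i)).
by rewrite /pair_vec h.
Qed.

Lemma meval_tL N (x y : Vec N) p : meval (pair_vec x y) (p \mPo tL N) = meval x p.
Proof.
rewrite comp_mpoly_meval; apply: meval_eq => i.
by rewrite tnth_mktuple mevalXU pair_l.
Qed.
Lemma meval_tR N (x y : Vec N) p : meval (pair_vec x y) (p \mPo tR N) = meval y p.
Proof.
rewrite comp_mpoly_meval; apply: meval_eq => i.
by rewrite tnth_mktuple mevalXU pair_r.
Qed.

Definition dpoly N (i j : 'I_N.+1) : bipoly N :=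
  'X_(lshift N.+1 i) * 'X_(rshift N.+1 j) - 'X_(lshift N.+1 j) * 'X_(rshift N.+1 i).

Lemma meval_dpoly N (x y : Vec N) i j :
  meval (pair_vec x y) (dpoly i j) = x i * y j - x j * y i.
Proof.
rewrite /dpoly mevalB.
rewrite !mevalM.
rewrite !mevalXU.
by rewrite !pair_l !pair_r.
Qed.

Definition bigP N (p q : hpoly N) i j : bipoly N :=
  (p \mPo tL N) * (q \mPo tR N) * dpoly i j.

Lemma meval_bigP N (x y : Vec N) p q i j :
  meval (pair_vec x y) (bigP p q i j) = meval x p * meval y q * (x i * y j - x j * y i).
Proof.
rewrite /bigP.
rewrite [LHS](mevalM _ (comp_mpoly (tL N) p * comp_mpoly (tR N) q) (dpoly i j)).
rewrite (mevalM _ (comp_mpoly (tL N) p) (comp_mpoly (tR N) q)).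
congr (_ * _ * _).
exact: meval_tL.
exact: meval_tR.
exact: meval_dpoly.
Qed.

Lemma homog_is N (p : hpoly N) : homogeneous p -> exists d, p \is d.-homog.
Proof. by case=> d hd; exists d; apply/dhomogP => m /hd. Qed.

Theorem lemma4p6 (N : nat) (X : set (Vec N)) :
  quasi_projective_variety X -> positive_dimensional X ->
  pseudo_Brody_hyperbolic X -> ~ h_special X.
Proof.
move=> qpv pd [E [[A [cA eE]] [[x0 [Xx0 nE0]] hE0]]] hs.
subst E.
have nA0 : ~ A x0 by move=> h; apply: nE0.
have hX : forall v, X v -> nonzero_vec v.
  case: qpv => [[A' [B' [[S' [_ eA]] [_ eX]]]] _] v.
  by rewrite eX eA; case=> [[]].
have [x [y [Xx [Xy [nAx [nAy npxy]]]]]] := two_points qpv pd cA Xx0 nA0 hX.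
have cA' := cA; case: cA' => SA [hSA eA].
have [p [Sp px]] : exists p, SA p /\ meval x p != 0.
  apply: contra_notP nAx => h; rewrite eA; split; first exact: hX.
  move=> p Sp; apply/eqP; apply: contra_notP h => ne; exists p; split => //.
  exact/negP.
have [q [Sq qy]] : exists q, SA q /\ meval y q != 0.
  apply: contra_notP nAy => h; rewrite eA; split; first exact: hX.
  move=> q Sq; apply/eqP; apply: contra_notP h => ne; exists q; split => //.
  exact/negP.
have [i [j hij]] : exists i j, x i * y j != x j * y i.
  apply: contra_notP npxy => h i j; apply/eqP; apply: contra_notP h => ne.
  by exists i, j; apply/negP.
have [dp hp] := homog_is (hSA p Sp).
have [dq hq] := homog_is (hSA q Sq).
pose P : bipoly N := bigP p q i j.
have mevalP : forall x' y', meval (pair_vec x' y') P =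
    meval x' p * meval y' q * (x' i * y' j - x' j * y' i).
  by move=> x' y'; apply: meval_bigP.
have hL : P \is (1 * dp + 0 * dq + (1 + 0)).-homog for @mfL N.
  rewrite /P /bigP /dpoly; apply: dhomogM; first apply: dhomogM.
  - by apply: comp_homog => // k; rewrite tnth_mktuple XlL.
  - by apply: comp_homog => // k; rewrite tnth_mktuple XrL.
  - by apply: rpredB; apply: dhomogM; rewrite ?XlL ?XrL.
have hR : P \is (0 * dp + 1 * dq + (0 + 1)).-homog for @mfR N.
  rewrite /P /bigP /dpoly; apply: dhomogM; first apply: dhomogM.
  - by apply: comp_homog => // k; rewrite tnth_mktuple XlR.
  - by apply: comp_homog => // k; rewrite tnth_mktuple XrR.
  - by apply: rpredB; apply: dhomogM; rewrite ?XlR ?XrR.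
have bih : forall P', [set P] P' -> bihomogeneous P'.
  move=> P' ->; exists (1 * dp + 0 * dq + (1 + 0))%N, (0 * dp + 1 * dq + (0 + 1))%N.
  move=> m hm; split.
    exact: (dhomogP _ _ _ hL).
  exact: (dhomogP _ _ _ hR).
have van : forall x' y', X x' -> X y' -> h_rel X x' y' ->
    forall P', [set P] P' -> meval (pair_vec x' y') P' = 0.
  move=> x' y' Xx' Xy' R P' ->; rewrite mevalP.
  case: (pselect (A x')) => [Ax'|nAx'].
    by rewrite eA in Ax'; rewrite (Ax'.2 p Sp) !mul0r.
  case: (pselect (A y')) => [Ay'|nAy'].
    by rewrite eA in Ay'; rewrite (Ay'.2 q Sq) mulr0 mul0r.
  have pr := chain cA hE0 hX Xx' nAx' R.
  by rewrite pr subrr mulr0.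
have := hs [set P] bih van x y Xx Xy P erefl.
rewrite mevalP => /eqP; rewrite !mulf_eq0 subr_eq0.
by rewrite (negbTE px) (negbTE qy) (negbTE hij).
Qed.
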